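(* Let $X \in \mathbb{R}^{n\times p}$, $y \in \mathbb{R}^n$, $\rho > 0$ and let $k$ be a positive integer. Define \[ \nu_{\ell 0} := \min_{\beta \in \mathbb{R}^p,\ \|\beta\|_0 \le k} \ \frac{1}{2}\|X\beta - y\|_2^2 + \frac{1}{2}\rho\|\beta\|_2^2, \] \[ \nu_{PWG} := \min_{t \in \mathbb{R},\ z \in [0,1]^p} \ \frac{1}{2} t \quad \text{s.t.} \quad \begin{bmatrix} t & y^T \\ y & I_n + \frac{1}{\rho} X \mathbf{D}(z) X^T\end{bmatrix} \succeq 0,\quad e^T z \le k, \] \[ \nu_{DCL} := \min_{b \in \mathbb{R}^p,\ B \in \mathcal{S}^p,\ z \in \mathbb{R}^p} \ \frac{1}{2}\left\langle \begin{bmatrix} y^Ty & -y^TX \\ -X^Ty & \rho I_p + X^TX\end{bmatrix}, \begin{bmatrix} 1 & b^T \\ b & B\end{bmatrix}\right\rangle \] subject to $\begin{bmatrix} 1 & b^T \\ b & B\end{bmatrix} \succeq 0$, $\begin{bmatrix} z_i & b_i \\ b_i & B_{ii}\end{bmatrix} \succeq 0$ for all $i = 1,\dots,p$, and $\sum_{i=1}^p z_i \le k$. Then \[ \nu_{\ell 0} \ge \nu_{DCL} \ge \nu_{PWG}. \]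
   Context: $\|\beta\|_0$ denotes the number of nonzero entries of $\beta$. $e$ is the all-ones vector of appropriate dimension, $\mathbf{D}(z)$ is the $p\times p$ diagonal matrix with diagonal entries $z_1,\dots,z_p$, $\mathcal{S}^p$ is the space of real symmetric $p\times p$ matrices, $\succeq 0$ denotes positive semidefiniteness, and $\langle A, C\rangle = \mathrm{trace}(A^T C)$ is the trace inner product. *)

(* Defs.v *)
From HB Require Import structures.
From mathcomp Require Import all_boot all_order all_algebra.
From mathcomp Require Import classical_sets reals.
Set Implicit Arguments. Unset Strict Implicit. Unset Printing Implicit Defensive.
Import Order.TTheory GRing.Theory Num.Theory.
Local Open Scope ring_scope.
Local Open Scope classical_set_scope.

Section Defs.
Variable R : realType.

Definition psd (m : nat) (A : 'M[R]_m) : Prop :=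
  A^T = A /\ forall v : 'cV[R]_m, 0 <= (v^T *m A *m v) 0 0.

Definition l0norm (p : nat) (beta : 'cV[R]_p) : nat := #|[set i | beta i 0 != 0]|.

Definition sqnorm (m : nat) (v : 'cV[R]_m) : R := \sum_i (v i 0) ^+ 2.

Definition tr_inner (m : nat) (A C : 'M[R]_m) : R := \tr (A^T *m C).

Definition nu_l0 (n p : nat) (X : 'M[R]_(n, p)) (y : 'cV[R]_n) (rho : R) (k : nat) : R :=
  inf [set v : R | exists beta : 'cV[R]_p, (l0norm beta <= k)%N /\
     v = 2^-1 * sqnorm (X *m beta - y) + 2^-1 * rho * sqnorm beta].

Definition nu_PWG (n p : nat) (X : 'M[R]_(n, p)) (y : 'cV[R]_n) (rho : R) (k : nat) : R :=
  inf [set v : R | exists (t : R) (z : 'cV[R]_p),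
     (forall i, 0 <= z i 0 <= 1) /\
     psd (block_mx (t%:M : 'M_1) y^T y (1%:M + rho^-1 *: (X *m diag_mx z^T *m X^T))) /\
     \sum_i z i 0 <= k%:R /\
     v = 2^-1 * t].

Definition nu_DCL (n p : nat) (X : 'M[R]_(n, p)) (y : 'cV[R]_n) (rho : R) (k : nat) : R :=
  inf [set v : R | exists (b : 'cV[R]_p) (B : 'M[R]_p) (z : 'cV[R]_p),
     B^T = B /\
     psd (block_mx (1%:M : 'M_1) b^T b B) /\
     (forall i, psd (block_mx ((z i 0)%:M : 'M_1) (b i 0)%:M (b i 0)%:M ((B i i)%:M : 'M_1))) /\
     \sum_i z i 0 <= k%:R /\
     v = 2^-1 * tr_inner
           (block_mx (y^T *m y) (- (y^T *m X)) (- (X^T *m y)) (rho *: 1%:M + X^T *m X))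
           (block_mx (1%:M : 'M_1) b^T b B)].
End Defs.

(* Main.v *)
Require Import Defs.
From mathcomp Require Import all_boot all_order all_algebra.
From mathcomp Require Import classical_sets reals.
From mathcomp Require Import ring lra.
Import Order.TTheory GRing.Theory Num.Theory.
Local Open Scope ring_scope.

Section H.
Variable R : realType.

Lemma qfE m (A : 'M[R]_m) (v : 'cV_m) :
  (v^T *m A *m v) 0 0 = \sum_i \sum_j v i 0 * A i j * v j 0.
Proof.
rewrite mxE; under eq_bigr do rewrite mxE mulr_suml.
rewrite exchange_big /=; apply: eq_bigr => i _; apply: eq_bigr => j _.
by rewrite mxE.
Qed.

Lemma qf_block m (a : R) (r : 'rV_m) (c : 'cV_m) (D : 'M_m) (u : 'cV_1) (w : 'cV_m) :
  ((col_mx u w)^T *m block_mx (a%:M : 'M_1) r c D *m col_mx u w) 0 0 =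
  a * (u 0 0)^+2 + u 0 0 * (r *m w) 0 0 + (w^T *m c) 0 0 * u 0 0 + (w^T *m D *m w) 0 0.
Proof.
rewrite tr_col_mx mul_row_block mul_row_col !mulmxDl !mxE.
rewrite !big_ord1 !mxE !big_ord1 !mxE.
rewrite mulr_sumr.
rewrite eqxx mulr1n.
have -> : \sum_j (u^T *m r) 0 j * w j 0 = \sum_i u 0 0 * (r 0 i * w i 0).
  by apply: eq_bigr => j _; rewrite mxE big_ord1 mxE mulrA.
rewrite expr2 /=. ring.
Qed.

Lemma trE n p (X : 'M[R]_(n, p)) (y : 'cV_n) (rho : R) (b : 'cV_p) (B : 'M_p) :
  tr_inner (block_mx (y^T *m y) (- (y^T *m X)) (- (X^T *m y)) (rho *: 1%:M + X^T *m X))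
           (block_mx (1%:M : 'M_1) b^T b B) =
  (y^T *m y) 0 0 - 2 * (y^T *m (X *m b)) 0 0 + rho * \tr B + \tr (X *m B *m X^T).
Proof.
rewrite /tr_inner tr_block_mx mulmx_block mxtrace_block.
rewrite !linearN /= !trmx_mul !trmxK !linearD /= !linearZ /= trmx1 trmx_mul trmxK.
rewrite mulmx1 !mulNmx !linearN /= mulmxDl mxtraceD -scalemxAl mul1mx mxtraceZ.
rewrite [\tr (X^T *m y *m b^T)]mxtrace_mulC.
have -> : b^T *m (X^T *m y) = (y^T *m (X *m b))^T by rewrite !trmx_mul trmxK mulmxA.
rewrite [\tr (y^T *m (X *m b))^T]mxtrace_tr.
rewrite -[X^T *m X *m B]mulmxA [\tr (X^T *m (X *m B))]mxtrace_mulC.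
rewrite /mxtrace !big_ord1 /= -[y^T *m X *m b]mulmxA.
have z0 : (0 : 'I_1) = ord0 by apply/val_inj.
rewrite z0; ring.
Qed.

Lemma sc00 (a : R) : (a%:M : 'M[R]_1) 0 0 = a.
Proof. by rewrite mxE eqxx mulr1n. Qed.

Lemma psd_split m (A : 'M[R]_(1 + m)) :
  psd A -> forall (u : 'cV[R]_1) (w : 'cV[R]_m), 0 <= ((col_mx u w)^T *m A *m col_mx u w) 0 0.
Proof. by case=> _ H u w; apply: H. Qed.

Lemma psd_test m (b : 'cV[R]_m) (B : 'M_m) :
  psd (block_mx (1%:M : 'M_1) b^T b B) ->
  forall x : 'cV_m, ((b^T *m x) 0 0)^+2 <= (x^T *m B *m x) 0 0.
Proof.
move=> /psd_split H x.
have := H ((- (b^T *m x) 0 0)%:M) x.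
rewrite qf_block sc00.
have -> : (x^T *m b) 0 0 = (b^T *m x) 0 0.
  by rewrite -[x^T *m b]trmxK trmx_mul trmxK mxE.
move=> h; rewrite -subr_ge0; nra.
Qed.

Lemma psd_Bii m (b : 'cV[R]_m) (B : 'M_m) :
  psd (block_mx (1%:M : 'M_1) b^T b B) -> forall i, (b i 0)^+2 <= B i i.
Proof.
move=> /psd_test H i; have := H (delta_mx i 0).
rewrite -colE trmx_delta -rowE -colE !mxE.
by [].
Qed.

Lemma psd_t m (t : R) (r : 'rV_m) (c : 'cV_m) (D : 'M_m) :
  psd (block_mx (t%:M : 'M_1) r c D) -> 0 <= t.
Proof.
move=> /psd_split H; have := H 1%:M 0.
rewrite qf_block sc00 !mulmx0 trmx0 !mul0mx !mxE !mulr0 !mul0r !addr0 expr1n mulr1 /=; apply.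
Qed.

Lemma qf11 (a r c d u w : R) :
  ((col_mx (u%:M : 'cV_1) (w%:M : 'cV_1))^T *m block_mx (a%:M : 'M_1) (r%:M : 'M_1) (c%:M : 'M_1) (d%:M : 'M_1)
    *m col_mx (u%:M : 'cV_1) (w%:M : 'cV_1)) 0 0 = a * u^+2 + 2 * r * u * w + d * w^+2 + (c - r) * u * w.
Proof.
rewrite qf_block sc00 tr_scalar_mx -!scalar_mxM !sc00; ring.
Qed.


Lemma trXBX n p (X : 'M[R]_(n, p)) (b : 'cV_p) (B : 'M_p) :
  psd (block_mx (1%:M : 'M_1) b^T b B) ->
  \sum_j ((X *m b) j 0)^+2 <= \tr (X *m B *m X^T).
Proof.
move=> /psd_test H; rewrite /mxtrace; apply: ler_sum => j _.
have := H (row j X)^T.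
have -> : (b^T *m (row j X)^T) 0 0 = (X *m b) j 0.
  by rewrite -trmx_mul -row_mul !mxE.
have -> : ((row j X)^T^T *m B *m (row j X)^T) 0 0 = (X *m B *m X^T) j j.
  by rewrite trmxK tr_row colE mulmxA -!row_mul -colE !mxE.
by [].
Qed.


Lemma quad (B d b S u : R) : 0 <= B -> 0 <= d -> b^+2 <= d * B ->
  0 <= B * S^+2 + 2 * b * S * u + d * u^+2.
Proof.
move=> hB hd hb.
have [B0|Bp] : B = 0 \/ 0 < B.
  by case: (ltrgtP 0 B) => [h|h|<-]; [right|move: h; rewrite ltNge hB|left].
  rewrite B0 mulr0 in hb; rewrite B0.
  have b0 : b = 0 by apply/eqP; rewrite -sqrf_eq0 eq_le sqr_ge0 andbT.
  rewrite b0; have := sqr_ge0 u; nra.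
have : 0 <= B * (B * S^+2 + 2 * b * S * u + d * u^+2).
  have -> : B * (B * S^+2 + 2 * b * S * u + d * u^+2) = (B * S + b * u)^+2 + (d * B - b^+2) * u^+2 by ring.
  apply: addr_ge0; first exact: sqr_ge0.
  by apply: mulr_ge0; [rewrite subr_ge0|exact: sqr_ge0].
by rewrite pmulr_rge0.
Qed.

Lemma final (n p : nat) (s rho T : R) (y w Xb : 'I_n -> R) (b u d Bd : 'I_p -> R) :
  0 < rho -> \sum_j (Xb j)^+2 <= T -> \sum_j Xb j * w j = \sum_i b i * u i ->
  (forall i, [/\ 0 <= Bd i, 0 <= d i & (b i)^+2 <= d i * Bd i]) ->
  0 <= (\sum_j (y j)^+2 - 2 * \sum_j y j * Xb j + rho * \sum_i Bd i + T) * s^+2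
       + 2 * s * \sum_j y j * w j + \sum_j (w j)^+2 + rho^-1 * \sum_i d i * (u i)^+2.
Proof.
move=> hr hT hX hi.
have h1 : 0 <= \sum_j (s * (y j - Xb j) + w j)^+2 by apply: sumr_ge0 => j _; exact: sqr_ge0.
have h2 : 0 <= \sum_i (rho * s^+2 * Bd i + 2 * s * b i * u i + rho^-1 * d i * (u i)^+2).
  apply: sumr_ge0 => i _; have [h3 h4 h5] := hi i.
  have := @quad (Bd i) (d i) (b i) (rho * s) (u i) h3 h4 h5.
  have rV : 0 < rho^-1 by rewrite invr_gt0.
  move=> q; have := mulr_ge0 (ltW rV) q.
  have -> : rho^-1 * (Bd i * (rho * s) ^+ 2 + 2 * b i * (rho * s) * u i + d i * u i ^+ 2)
     = rho * s^+2 * Bd i + 2 * s * b i * u i + rho^-1 * d i * (u i)^+2.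
    by field; rewrite gt_eqF.
  by [].
have E1 : \sum_j (s * (y j - Xb j) + w j)^+2 =
   s^+2 * \sum_j (y j)^+2 + (- (2 * s^+2)) * \sum_j (y j * Xb j) + s^+2 * \sum_j (Xb j)^+2
   + (2 * s) * \sum_j (y j * w j) + (- (2 * s)) * \sum_j (Xb j * w j) + \sum_j (w j)^+2.
  rewrite !mulr_sumr -!big_split /=; apply: eq_bigr => j _; ring.
have E2 : \sum_i (rho * s^+2 * Bd i + 2 * s * b i * u i + rho^-1 * d i * (u i)^+2) =
   (rho * s^+2) * \sum_i Bd i + (2 * s) * \sum_i (b i * u i) + rho^-1 * \sum_i (d i * (u i)^+2).
  rewrite !mulr_sumr -!big_split /=; apply: eq_bigr => i _; ring.
rewrite E1 in h1; rewrite E2 -hX in h2.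
have h3 : 0 <= (T - \sum_j (Xb j)^+2) * s^+2 by apply: mulr_ge0; [rewrite subr_ge0|exact: sqr_ge0].
nra.
Qed.


Lemma facts_i (b B z : R) : b^+2 <= B ->
  psd (block_mx (z%:M : 'M_1) (b%:M : 'M_1) (b%:M : 'M_1) (B%:M : 'M_1)) ->
  [/\ 0 <= B, 0 <= Num.min z 1, Num.min z 1 <= 1 & b^+2 <= Num.min z 1 * B].
Proof.
move=> hBb /psd_split H.
have q : forall u w, 0 <= z * u^+2 + 2 * b * u * w + B * w^+2.
  move=> u w; have := H u%:M w%:M; rewrite qf11 subrr !mul0r addr0; exact.
have hz : 0 <= z by have := q 1 0; rewrite expr1n expr0n /= !mulr0 mulr1 !addr0.
have hB : 0 <= B by apply: le_trans hBb; exact: sqr_ge0.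
have hzB : b^+2 <= z * B.
  have [B0|Bp] : B = 0 \/ 0 < B.
    by case: (ltrgtP 0 B) => [h|h|<-]; [right|move: h; rewrite ltNge hB|left].
    rewrite B0 mulr0; by rewrite B0 in hBb.
  have := q B (- b).
  have -> : z * B ^+ 2 + 2 * b * B * - b + B * (- b) ^+ 2 = B * (z * B - b^+2) by ring.
  by rewrite pmulr_rge0 // subr_ge0.
have [h1|h1] := leP z 1.
  by [].
by split => //; rewrite mul1r.
Qed.


Lemma dcl_pwg n p (X : 'M[R]_(n, p)) (y : 'cV_n) (rho : R) (b : 'cV_p) (B : 'M_p) (z : 'cV_p) :
  0 < rho -> psd (block_mx (1%:M : 'M_1) b^T b B) ->
  (forall i, psd (block_mx ((z i 0)%:M : 'M_1) (b i 0)%:M (b i 0)%:M ((B i i)%:M : 'M_1))) ->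
  let t := tr_inner (block_mx (y^T *m y) (- (y^T *m X)) (- (X^T *m y)) (rho *: 1%:M + X^T *m X))
           (block_mx (1%:M : 'M_1) b^T b B) in
  let z' := \col_i Num.min (z i 0) 1 in
  [/\ (forall i, 0 <= z' i 0 <= 1),
     psd (block_mx (t%:M : 'M_1) y^T y (1%:M + rho^-1 *: (X *m diag_mx z'^T *m X^T))) &
     \sum_i z' i 0 <= \sum_i z i 0].
Proof.
move=> hr hbig hsm t z'.
have fi : forall i, [/\ 0 <= B i i, 0 <= z' i 0, z' i 0 <= 1 & (b i 0)^+2 <= z' i 0 * B i i].
  by move=> i; rewrite mxE; apply: facts_i; [exact: psd_Bii|exact: hsm].
split.
- by move=> i; have [_ h1 h2 _] := fi i; rewrite h1 h2.
- split.
    rewrite tr_block_mx tr_scalar_mx trmxK; congr block_mx.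
    by rewrite linearD /= linearZ /= trmx1 !trmx_mul trmxK tr_diag_mx mulmxA.
  move=> v; rewrite -(vsubmxK v) qf_block.
  set u := usubmx v; set w := dsubmx v.
  have addE : forall m1 m2 (A C : 'M[R]_(m1, m2)) i j, (A + C) i j = A i j + C i j by move=> *; rewrite mxE.
  have scE : forall m1 m2 (a : R) (A : 'M[R]_(m1, m2)) i j, (a *: A) i j = a * A i j by move=> *; rewrite mxE.
  have HM : (w^T *m (1%:M + rho^-1 *: (X *m diag_mx z'^T *m X^T)) *m w) 0 0 =
     \sum_j (w j 0)^+2 + rho^-1 * \sum_i (Num.min (z i 0) 1 * ((X^T *m w) i 0)^+2).
    rewrite mulmxDr mulmxDl mulmx1 -scalemxAr -scalemxAl addE scE.
    have -> : w^T *m (X *m diag_mx z'^T *m X^T) *m w = (X^T *m w)^T *m diag_mx z'^T *m (X^T *m w).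
      by rewrite trmx_mul trmxK !mulmxA.
    congr (_ + _ * _).
      by rewrite mxE; apply: eq_bigr => j _; rewrite mxE expr2.
    rewrite mul_mx_diag mxE; apply: eq_bigr => i _; rewrite !mxE; ring.
  rewrite HM /t trE.
  have e1 : (y^T *m y) 0 0 = \sum_j (y j 0)^+2 by rewrite mxE; apply: eq_bigr => j _; rewrite mxE expr2.
  have e2 : (y^T *m (X *m b)) 0 0 = \sum_j y j 0 * (X *m b) j 0 by rewrite mxE; apply: eq_bigr => j _; rewrite mxE.
  have e3 : (y^T *m w) 0 0 = \sum_j y j 0 * w j 0 by rewrite mxE; apply: eq_bigr => j _; rewrite mxE.
  have e4 : (w^T *m y) 0 0 = \sum_j y j 0 * w j 0 by rewrite mxE; apply: eq_bigr => j _; rewrite mxE mulrC.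
  have hX : \sum_j (X *m b) j 0 * w j 0 = \sum_i b i 0 * (X^T *m w) i 0.
    have -> : \sum_j (X *m b) j 0 * w j 0 = (w^T *m (X *m b)) 0 0.
      by rewrite [RHS]mxE; apply: eq_bigr => j _; rewrite [w^T _ _]mxE mulrC.
    have -> : w^T *m (X *m b) = (X^T *m w)^T *m b by rewrite trmx_mul trmxK mulmxA.
    by rewrite [LHS]mxE; apply: eq_bigr => j _; rewrite [_^T _ _]mxE mulrC.
  have hT := @trXBX n p X b B hbig.
  have fi' : forall i, [/\ 0 <= B i i, 0 <= Num.min (z i 0) 1 & (b i 0)^+2 <= Num.min (z i 0) 1 * B i i].
    by move=> i; have [h1 h2 _ h4] := fi i; rewrite mxE in h2 h4.
  have := @final n p (u 0 0) rho (\tr (X *m B *m X^T)) (fun j => y j 0) (fun j => w j 0)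
     (fun j => (X *m b) j 0) (fun i => b i 0) (fun i => (X^T *m w) i 0)
     (fun i => Num.min (z i 0) 1) (fun i => B i i) hr hT hX fi'.
  rewrite e1 e2 e3 e4 /mxtrace => h; apply: (le_trans h).
  rewrite le_eqVlt; apply/orP; left; apply/eqP; ring.
rewrite ler_sum // => i _; rewrite mxE.
by have [h|h] := leP (z i 0) 1 => //; apply: ltW.
Qed.


Lemma card_sum p (b : 'cV[R]_p) : \sum_i ((b i 0 != 0)%:R : R) = (l0norm b)%:R.
Proof.
rewrite /l0norm -sum1_card natr_sum [RHS]big_mkcond /=; apply: eq_bigr => i _.
by rewrite /in_mem /mem /= /in_set boolp.asboolb; case: (b i 0 != 0).
Qed.

Lemma l0_dcl n p (X : 'M[R]_(n, p)) (y : 'cV_n) (rho : R) (k : nat) (beta : 'cV_p) :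
  (l0norm beta <= k)%N ->
  exists (b : 'cV[R]_p) (B : 'M[R]_p) (z : 'cV[R]_p),
     B^T = B /\
     psd (block_mx (1%:M : 'M_1) b^T b B) /\
     (forall i, psd (block_mx ((z i 0)%:M : 'M_1) (b i 0)%:M (b i 0)%:M ((B i i)%:M : 'M_1))) /\
     \sum_i z i 0 <= k%:R /\
     2^-1 * sqnorm (X *m beta - y) + 2^-1 * rho * sqnorm beta = 2^-1 * tr_inner
           (block_mx (y^T *m y) (- (y^T *m X)) (- (X^T *m y)) (rho *: 1%:M + X^T *m X))
           (block_mx (1%:M : 'M_1) b^T b B).
Proof.
move=> hk.
have Bs : (beta *m beta^T)^T = beta *m beta^T by rewrite trmx_mul trmxK.
exists beta, (beta *m beta^T), (\col_i (beta i 0 != 0)%:R).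
split => //; split; [|split; [|split]].
- split; first by rewrite tr_block_mx trmx1 trmxK Bs.
  move=> v; rewrite -(vsubmxK v) qf_block.
  set u := usubmx v; set w := dsubmx v.
  have -> : (w^T *m beta) 0 0 = (beta^T *m w) 0 0.
    by rewrite !mxE; apply: eq_bigr => j _; rewrite !mxE mulrC.
  have -> : (w^T *m (beta *m beta^T) *m w) 0 0 = ((w^T *m beta) 0 0) * ((beta^T *m w) 0 0).
    by rewrite mulmxA -mulmxA [LHS]mxE big_ord1.
  have -> : (w^T *m beta) 0 0 = (beta^T *m w) 0 0.
    by rewrite !mxE; apply: eq_bigr => j _; rewrite !mxE mulrC.
  have := sqr_ge0 (u 0 0 + (beta^T *m w) 0 0); nra.
- move=> i; split.
    by rewrite tr_block_mx !tr_scalar_mx.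
  move=> v; rewrite -(vsubmxK v) (mx11_scalar (usubmx v)) (mx11_scalar (dsubmx v)) qf11.
  rewrite subrr !mul0r addr0 !mxE big_ord1 !mxE.
  case: eqP => [->|_] /=.
    by rewrite !mulr0 !mul0r !addr0.
  rewrite mulr1n; set a := beta i 0.
  have := sqr_ge0 (v (lshift 1 0) 0 + a * v (rshift 1 0) 0); nra.
- under eq_bigr do rewrite mxE.
  by rewrite card_sum ler_nat.
- rewrite trE.
  have t1 : \tr (beta *m beta^T) = sqnorm beta.
    rewrite mxtrace_mulC /mxtrace big_ord1 mxE; apply: eq_bigr => j _; rewrite mxE expr2.
    done.
  have t2 : \tr (X *m (beta *m beta^T) *m X^T) = sqnorm (X *m beta).
    rewrite mulmxA -mulmxA -trmx_mul mxtrace_mulC /mxtrace big_ord1 mxE.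
    by apply: eq_bigr => j _; rewrite mxE expr2.
  have t3 : (y^T *m y) 0 0 = sqnorm y by rewrite mxE; apply: eq_bigr => j _; rewrite mxE expr2.
  have t4 : (y^T *m (X *m beta)) 0 0 = \sum_j y j 0 * (X *m beta) j 0.
    by rewrite [LHS]mxE; apply: eq_bigr => j _; rewrite [_^T _ _]mxE.
  have t5 : sqnorm (X *m beta - y) = sqnorm (X *m beta) + (-2) * \sum_j y j 0 * (X *m beta) j 0 + sqnorm y.
    rewrite /sqnorm mulr_sumr -!big_split /=; apply: eq_bigr => j _.
    rewrite !mxE; ring.
  rewrite t1 t2 t3 t4 t5; ring.
Qed.

End H.

Local Open Scope classical_set_scope.

Theorem proposition1 (R : realType) (n p : nat) (X : 'M[R]_(n, p)) (y : 'cV[R]_n)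
  (rho : R) (k : nat) (hrho : 0 < rho) (hk : (0 < k)%N) :
  nu_DCL X y rho k <= nu_l0 X y rho k /\ nu_PWG X y rho k <= nu_DCL X y rho k.
Proof.
rewrite /nu_l0; set L := [set _ | _].
rewrite /nu_DCL; set D := [set _ | _].
rewrite /nu_PWG; set P := [set _ | _].
have LD : forall v, L v -> D v.
  move=> v [beta [hb ->]].
  have [b [B [z [h1 [h2 [h3 [h4 h5]]]]]]] := @l0_dcl R n p X y rho k beta hb.
  by exists b, B, z; rewrite h5.
have DP : forall v, D v -> P v.
  move=> v [b [B [z [h1 [h2 [h3 [h4 ->]]]]]]].
  have [h6 h7 h8] := @dcl_pwg R n p X y rho b B z hrho h2 h3.
  exists (tr_inner
     (block_mx (y^T *m y) (- (y^T *m X)) (- (X^T *m y)) (rho *: 1%:M + X^T *m X))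
     (block_mx (1%:M : 'M_1) b^T b B)), (\col_i Num.min (z i 0) 1).
  split => //; split => //; split => //.
  exact: le_trans h8 h4.
have Plb : forall v, P v -> 0 <= v.
  move=> v [t [z [_ [h [_ ->]]]]]; apply: mulr_ge0; first by rewrite invr_ge0.
  exact: (@psd_t R _ _ _ _ _ h).
have L0 : L (2^-1 * sqnorm (X *m 0 - y) + 2^-1 * rho * sqnorm (0 : 'cV[R]_p)).
  exists 0; split => //.
  have : ((l0norm (0 : 'cV[R]_p))%:R : R) = 0.
    by rewrite -card_sum big1 // => i _; rewrite mxE eqxx.
  by move/eqP; rewrite pnatr_eq0 => /eqP ->.
have Dlb : has_lbound D by exists 0 => v /DP /Plb.
have Plb' : has_lbound P by exists 0 => v /Plb.
split.
  apply: lb_le_inf; first by eexists; exact: L0.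
  by move=> v /LD hv; apply: ge_inf.
apply: lb_le_inf; first by eexists; apply: LD; exact: L0.
by move=> v /DP hv; apply: ge_inf.
Qed.
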